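(* There is a constant $C>0$ such that $f^{\Delta_n}_{d_n}=O(C^{d_n})$ as $n\to\infty$.
   Context: For a squarefree positive integer $k$ let $P(k)$ be its set of prime factors ($P(1)=\emptyset$). $\Delta_n$ is the abstract simplicial complex $\{P(k):1\le k\le n,\ k\text{ squarefree}\}$; a $d$-simplex is a member of cardinality $d+1$, $d_n=\dim\Delta_n$ is the largest such $d$, and $f^{\Delta_n}_{d_n}$ is the number of $d_n$-simplices of $\Delta_n$ (i.e. the number of squarefree $m\le n$ with exactly $d_n+1$ prime factors). *)

(* Defs.v *)
From HB Require Import structures.
From mathcomp Require Import all_boot all_order all_algebra.
Set Implicit Arguments. Unset Strict Implicit. Unset Printing Implicit Defensive.

Definition squarefree (k : nat) : bool :=
  (0 < k) && all (fun p => ~~ (p * p %| k)) (primes k).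

Definition nprimes (k : nat) : nat := size (primes k).

(* d_n + 1 : the largest cardinality of a face P(k), 1 <= k <= n squarefree. *)
Definition maxface (n : nat) : nat :=
  \max_(1 <= k < n.+1 | squarefree k) nprimes k.

(* d_n = dim Delta_n (as a nat; equals maxface n - 1 whenever n >= 2). *)
Definition dim_Delta (n : nat) : nat := (maxface n).-1.

Definition ftop (n : nat) : nat :=
  #|[set m : 'I_n.+1 | (1 <= m) && squarefree m && (nprimes m == maxface n)]|.

(* Main.v *)
Require Import Defs.
From HB Require Import structures.
From mathcomp Require Import all_boot all_order all_algebra.
From mathcomp Require Import zify.
Import Order.TTheory GRing.Theory Num.Theory.
Set Implicit Arguments. Unset Strict Implicit. Unset Printing Implicit Defensive.

Lemma sqf_logn x p : squarefree x -> logn p x <= 1.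
Proof.
case/andP=> x0 /allP H.
case: (boolP (p \in primes x)) => pin; last first.
  by move: pin; rewrite -logn_gt0; case: (logn p x).
have pp : prime p by move: pin; rewrite mem_primes => /andP[].
have := H p pin; rewrite mulnn pfactor_dvdn //.
by rewrite -ltnNge ltnS.
Qed.

Lemma logn_sqf x : 0 < x -> (forall p, logn p x <= 1) -> squarefree x.
Proof.
move=> x0 H; rewrite /squarefree x0 /=; apply/allP => p pin.
have pp : prime p by move: pin; rewrite mem_primes => /andP[].
by rewrite mulnn pfactor_dvdn // -ltnNge ltnS H.
Qed.

Lemma sqf_lognE x p : squarefree x -> logn p x = (p \in primes x).
Proof.
move=> sx; have := sqf_logn p sx; rewrite -logn_gt0.
by case: (logn p x) => [|[|]].
Qed.

Lemma logn_partE pi n p : logn p n`_pi = if p \in pi then logn p n else 0.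
Proof.
case: n => [|n]; first by rewrite partn0 logn1 logn0; case: ifP.
have H : forall rho, p \notin rho -> logn p n.+1`_rho = 0.
  move=> rho prho; apply/eqP; rewrite eqn0Ngt logn_gt0 primes_part mem_filter.
  by rewrite (negbTE prho).
case: ifP => pin; last by apply: H; rewrite pin.
rewrite -[in RHS](partnC pi (ltn0Sn n)) lognM ?part_gt0 // (H pi^') ?addn0 //.
by rewrite inE /= pin.
Qed.

Definition cntp y := count prime (iota 0 y).
Definition prim y := \prod_(0 <= p < y | prime p) p.

Lemma prim_gt0 y : 0 < prim y.
Proof. by rewrite /prim; apply: prodn_cond_gt0 => p /prime_gt0. Qed.

Lemma logn_prim p y : logn p (prim y) = (prime p && (p < y)).
Proof.
elim: y => [|y IH]; first by rewrite /prim big_geq // logn1 andbF.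
rewrite /prim big_mkcond big_nat_recr //= -big_mkcond /= -/(prim y).
case: ifP => py.
  rewrite lognM ?prim_gt0 ?prime_gt0 // IH logn_prime // ltnS.
  case: (ltngtP p y) => [lt|gt|->]; first by rewrite andbT addn0.
    by rewrite andbF.
  by rewrite py andbF andbT.
rewrite muln1 IH ltnS.
by case: (ltngtP p y) => [lt|gt|->] //; rewrite py.
Qed.

Lemma prim_sqf y : squarefree (prim y).
Proof. by apply: logn_sqf (prim_gt0 y) _ => p; rewrite logn_prim; case: (_ && _). Qed.

Lemma primes_prim y : primes (prim y) = filter prime (iota 0 y).
Proof.
apply: (irr_sorted_eq ltn_trans ltnn); first exact: sorted_primes.
  by apply: sorted_filter; [exact: ltn_trans| exact: iota_ltn_sorted].
move=> p; rewrite -logn_gt0 logn_prim mem_filter mem_iota /= add0n.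
by case: (_ && _).
Qed.

Lemma nprimes_prim y : nprimes (prim y) = cntp y.
Proof. by rewrite /nprimes primes_prim size_filter. Qed.

Lemma primS q : prime q -> prim q.+1 = prim q * q.
Proof. by move=> pq; rewrite /prim big_mkcond big_nat_recr //= -big_mkcond pq. Qed.

Lemma cntpS y : cntp y.+1 = cntp y + prime y.
Proof. by rewrite /cntp -addn1 iotaD count_cat /= addn0. Qed.

Lemma leq_pow m n e : m <= n -> m ^ e <= n ^ e.
Proof. by move=> mn; elim: e => // e IH; rewrite !expnS leq_mul. Qed.

Lemma prim_le y : prim y <= y ^ y.
Proof.
elim: y => [|y IH]; first by rewrite /prim big_geq.
rewrite /prim big_mkcond big_nat_recr //= -big_mkcond -/(prim y).
apply: (@leq_trans (y ^ y * y.+1)); first by apply: leq_mul => //; case: ifP.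
rewrite expnS mulnC leq_mul2l; apply/orP; right.
exact: leq_pow.
Qed.


Lemma maxface_ge n m : squarefree m -> 1 <= m <= n -> nprimes m <= maxface n.
Proof.
move=> sm /andP[m1 mn]; rewrite /maxface.
apply: (@leq_bigmax_seq _ _ _ (fun k => nprimes k) m) => //.
by rewrite mem_index_iota m1 ltnS.
Qed.

Lemma cntp_mono y z : y <= z -> cntp y <= cntp z.
Proof.
move=> /subnKC <-; elim: (z - y) => [|d IH]; first by rewrite addn0.
by rewrite addnS cntpS (leq_trans IH) // leq_addr.
Qed.

Lemma cntp_unbounded k : exists y, k < cntp y.
Proof.
elim: k => [|k [y Hy]]; first by exists 3.
have [p yp pp] := prime_above y.
exists p.+1; rewrite cntpS pp addn1 ltnS.
by apply: leq_trans Hy (cntp_mono (ltnW yp)).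
Qed.

Lemma choose_q k : exists q, prime q /\ cntp q = k.
Proof.
have [y Py Hmin] := find_ex_minn (cntp_unbounded k).
case: y Py Hmin => [|z] Py Hmin; first by [].
have Hz : cntp z <= k by rewrite leqNgt; apply/negP => /Hmin; rewrite ltnn.
move: Py; rewrite cntpS; case: (boolP (prime z)) => pz; last first.
  by rewrite addn0 ltnNge Hz.
by rewrite addn1 ltnS => Hk; exists z; split => //; apply/eqP; rewrite eqn_leq Hz.
Qed.

Lemma n_lt n q : prime q -> cntp q = maxface n -> n < prim q * q.
Proof.
move=> pq cq; rewrite ltnNge; apply/negP => Hle.
have := maxface_ge (n := n) (prim_sqf q.+1).
rewrite nprimes_prim cntpS pq -cq addn1 ltnn primS // muln_gt0 prim_gt0 prime_gt0 //.
by rewrite Hle => /(_ isT).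
Qed.

Lemma sqf_prod x : squarefree x -> x = \prod_(p <- primes x) p.
Proof.
move=> sx; have x0 : 0 < x by case/andP: sx.
rewrite {1}(prod_prime_decomp x0) prime_decompE big_map /=.
apply: eq_big_seq => p pin; rewrite (sqf_lognE _ sx) pin expn1 //.
Qed.

Lemma prod_ge b s : (forall x, x \in s -> b <= x) -> b ^ size s <= \prod_(x <- s) x.
Proof.
elim: s => [|a s IH] H; first by rewrite big_nil.
rewrite big_cons expnS leq_mul //; first by apply: H; rewrite inE eqxx.
by apply: IH => x xs; apply: H; rewrite inE xs orbT.
Qed.

Lemma sqf_dvd x y : squarefree x -> 0 < y -> y %| x -> squarefree y.
Proof.
move=> sx y0 yx; apply: logn_sqf y0 _ => p.
have x0 : 0 < x by case/andP: sx.
exact: leq_trans (dvdn_leq_log p x0 yx) (sqf_logn p sx).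
Qed.

Lemma size_filterC (T : Type) (a : pred T) s :
  size (filter a s) + size (filter (predC a) s) = size s.
Proof. by rewrite !size_filter count_predC. Qed.

Lemma per_m q n m : prime q -> n < prim q * q -> 0 < m -> m <= n ->
  squarefree m -> nprimes m = cntp q ->
  exists s, [/\ uniq s, all (fun x => x < q) s,
     q ^ size s <= m`_[pred p | p < q]^' &
     m`_[pred p | p < q]^' < q * \prod_(x <- s) x].
Proof.
move=> pq nlt m0 mn sm km.
set pi : nat_pred := [pred p | p < q].
set g := m`_pi; set h := m`_pi^'; set P := prim q.
set c := P`_(\pi(m))^'.
have P0 : 0 < P by exact: prim_gt0.
have Ha : g = P`_(\pi(m)).
  apply: eqn_from_log; rewrite ?part_gt0 // => p.
  rewrite !logn_partE logn_prim (sqf_lognE _ sm) /=.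
  rewrite [p \in \pi(m)]unfold_in /=.
  case: (boolP (p \in primes m)) => pin; last by case: ifP.
  have pp : prime p by move: pin; rewrite mem_primes => /andP[].
  by rewrite pp.
have Hb : P = g * c by rewrite Ha partnC.
have sc : squarefree c := sqf_dvd (prim_sqf q) (part_gt0 _ _) (dvdn_part _ _).
have sh : squarefree h := sqf_dvd sm (part_gt0 _ _) (dvdn_part _ _).
have Hc : size (primes c) = size (primes h).
  have e1 := size_filterC (fun x => x \in \pi(m)) (primes P).
  have e2 := size_filterC (fun x => x \in pi) (primes m).
  move: e1 e2; rewrite -!primes_part -/h -Ha -/c.
  rewrite -[primes m]/(primes m) -/(nprimes m) km -[size (primes P)]/(nprimes P).
  rewrite nprimes_prim -/g => e1 e2.
  have E1 : primes c = [seq x <- primes P | [predC \pi(m)] x].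
    by rewrite /c primes_part; apply: eq_filter => x; rewrite !inE.
  have E2 : primes h = [seq x <- primes m | [predC pi] x].
    by rewrite /h primes_part; apply: eq_filter => x; rewrite !inE.
  rewrite E1 E2; apply/eqP; rewrite -(eqn_add2l (size (primes g))) e1.
  by rewrite e2.
exists (primes c); split.
- exact: primes_uniq.
- apply/allP => p pin.
  have : 0 < logn p P.
    apply: leq_trans (dvdn_leq_log p P0 (dvdn_part (\pi(m))^' P)).
    by rewrite -/c logn_gt0.
  by rewrite /P logn_prim; case: (p < q); rewrite ?andbT ?andbF.
- rewrite Hc; apply: (@leq_trans (\prod_(x <- primes h) x)); last by rewrite -(sqf_prod sh).
  apply: prod_ge => p.
  rewrite primes_part mem_filter => /andP[pin _].
  by move: pin; rewrite !inE /= -leqNgt.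
- rewrite -(sqf_prod sc).
  have : g * h <= n by rewrite /g /h partnC.
  move=> ghn; have := leq_ltn_trans ghn nlt; rewrite -/P Hb -mulnA ltn_mul2l.
  by case/andP => _; rewrite mulnC.
Qed.

Lemma bernoulli a t n : a ^ n.+1 + n.+1 * t * a ^ n <= (a + t) ^ n.+1.
Proof.
elim: n => [|n IH]; first by rewrite !expn1 expn0 muln1 mul1n.
rewrite [(a + t) ^ n.+2]expnS.
apply: leq_trans (leq_mul (leqnn (a + t)) IH).
rewrite !expnS; nia.
Qed.

Lemma half_pow q t sv : 0 < sv -> q <= sv * t -> (q - t) ^ sv * 2 <= q ^ sv.
Proof.
move=> sv0 H; case: (leqP q t) => qt.
  have -> : q - t = 0 by lia.
  by rewrite exp0n.
case: sv sv0 H => // v _ H.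
have := bernoulli (q - t) t v; rewrite subnK ?(ltnW qt) // => B.
apply: leq_trans B; rewrite muln2 -addnn leq_add2l expnS leq_mul2r.
by apply/orP; right; exact: leq_trans (leq_subr t q) H.
Qed.

Lemma prod_le_cond (s : seq nat) (P : pred nat) b :
  (forall x, x \in s -> P x -> x <= b) -> \prod_(x <- s | P x) x <= b ^ count P s.
Proof.
elim: s => [|a s IH] H; first by rewrite big_nil.
rewrite big_cons /=; case: ifP => Pa.
  rewrite expnD expn1 leq_mul //; first by apply: H; rewrite ?inE ?eqxx.
  by apply: IH => x xs; apply: H; rewrite inE xs orbT.
by rewrite add0n; apply: IH => x xs; apply: H; rewrite inE xs orbT.
Qed.

Lemma prodB q t (s : seq nat) : 0 < t -> uniq s -> all (fun x => x < q) s ->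
  2 * t <= size s -> \prod_(x <- s) x <= q ^ (size s - t) * (q - t) ^ t.
Proof.
move=> t0 us /allP sq st.
rewrite (bigID (fun x => x <= q - t)) /=.
set a := count (fun x => x <= q - t) s.
set b := count (predC (fun x => x <= q - t)) s.
have Hab : a + b = size s by rewrite count_predC.
have Hb : b <= t.-1.
  rewrite /b -size_filter.
  have -> : t.-1 = size (iota (q - t).+1 t.-1) by rewrite size_iota.
  apply: uniq_leq_size; first exact: filter_uniq.
  move=> x; rewrite mem_filter /= mem_iota -ltnNge => /andP[xl xs].
  have := sq x xs; rewrite xl /=; lia.
have P1 : \prod_(i <- s | i <= q - t) i <= (q - t) ^ a by apply: prod_le_cond.
have P2 : \prod_(i <- s | ~~ (i <= q - t)) i <= q ^ b.
  apply: (@leq_trans (q ^ count (fun x => ~~ (x <= q - t)) s)) => //.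
  by apply: prod_le_cond => x xs _; apply: ltnW; apply: sq.
apply: leq_trans (leq_mul P1 P2) _.
have -> : a = t + (a - t) by lia.
rewrite expnD -mulnA mulnC leq_mul //.
have -> : size s - t = (a - t) + b by lia.
by rewrite expnD leq_mul // leq_pow // leq_subr.
Qed.

Definition ell q := (trunc_log 2 q).+1.
Definition uu q := (ell q)./2.+1.
Definition sv q := 2 ^ uu q.
Definition tt q := sv q * ell q.
Definition JJ q := 2 * tt q.

Lemma q_lt_ell q : q < 2 ^ ell q.
Proof. exact: trunc_log_ltn. Qed.

Lemma ell_le_2uu q : ell q <= (uu q).*2.
Proof.
rewrite /uu doubleS; have := odd_double_half (ell q).
case: (odd _) => /= E; lia.
Qed.

Lemma NJ q s : 1 < q -> uniq s -> all (fun x => x < q) s ->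
  q ^ size s < q * \prod_(x <- s) x -> size s < JJ q.
Proof.
move=> q1 us sq H; rewrite ltnNge; apply/negP => Hj.
have t0 : 0 < tt q by rewrite /tt muln_gt0 expn_gt0.
have HB := prodB t0 us sq Hj.
have H1 : q ^ tt q * q ^ (size s - tt q) < q * (q ^ (size s - tt q) * (q - tt q) ^ tt q).
  rewrite -expnD subnKC; last by move: Hj; rewrite /JJ; lia.
  by apply: leq_trans H _; rewrite leq_mul2l HB orbT.
have H2 : q ^ tt q < q * (q - tt q) ^ tt q.
  move: H1; rewrite mulnCA [q ^ tt q * _]mulnC ltn_mul2l expn_gt0 (ltnW q1) /=.
  by [].
have H3 : (q - tt q) ^ tt q * 2 ^ ell q <= q ^ tt q.
  rewrite /tt !expnM -expnMn; apply: leq_pow; apply: half_pow; first exact: expn_gt0.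
  apply: ltnW; apply: leq_trans (q_lt_ell q) _.
  apply: (@leq_trans (sv q * sv q)).
    by rewrite /sv -expnD addnn leq_exp2l // ell_le_2uu.
  by rewrite mulnA leq_pmulr.
have H4 := q_lt_ell q.
set X := (q - tt q) ^ tt q in H2 H3; set Y := q ^ tt q in H2 H3; set Z := 2 ^ ell q in H3 H4.
nia.
Qed.

Lemma div2_le N d : 0 < d -> (2*N) %/ d <= 2 * (N %/ d) + 1.
Proof.
move=> d0; rewrite {1}(divn_eq N d) mulnDr mulnA divnMDl //.
rewrite leq_add2l -ltnS ltn_divLR //.
lia.
Qed.

Lemma central_bin_ge N : 2 ^ N <= 'C(N.*2, N).
Proof.
elim: N => [|N IH]; first by rewrite bin0.
rewrite doubleS binS binS expnS mul2n -addnn.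
apply: leq_add; last by apply: leq_trans IH (leq_bin2l _ (leqnSn _)).
by apply: leq_trans IH (leq_addl _ _).
Qed.

Lemma sum_ind_le M L : \sum_(1 <= k < M.+1) (k <= L) = minn M L.
Proof.
elim: M => [|M IH]; first by rewrite big_geq // min0n.
rewrite big_nat_recr //= IH; case: (leqP M.+1 L) => H; rewrite /=; lia.
Qed.

Lemma logn_bin p N : prime p -> 0 < N -> p ^ logn p 'C(N.*2, N) <= N.*2.
Proof.
move=> pp N0; have p1 := prime_gt1 pp.
set L := trunc_log p N.*2.
apply: (@leq_trans (p ^ L)); last by apply: trunc_logP => //; rewrite double_gt0.
rewrite leq_exp2l //.
have E : logn p (N.*2)`! = logn p 'C(N.*2, N) + (logn p N`! + logn p N`!).
  rewrite -[in LHS]addnn -(bin_fact (leq_addr N N)) addnK addnn.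
  have C0 : 0 < 'C(N.*2, N) by rewrite bin_gt0 -addnn leq_addr.
  by rewrite lognM ?muln_gt0 ?fact_gt0 // lognM ?fact_gt0.
have A := logn_fact N.*2 pp; have B := logn_fact N pp.
have B' : logn p N`! = \sum_(1 <= k < (N.*2).+1) N %/ p ^ k.
  rewrite B [RHS](@big_cat_nat _ _ _ N.+1) //=; last by rewrite ltnS -addnn leq_addr.
  rewrite [X in _ = _ + X]big1_seq ?addn0 // => k /andP[_].
  rewrite mem_index_iota => /andP[k1 _]; apply: divn_small.
  apply: leq_trans k1 _; apply: ltnW; apply: leq_trans (ltn_expl k p1) _.
  by [].
have H : \sum_(1 <= k < (N.*2).+1) N.*2 %/ p ^ k <=
         \sum_(1 <= k < (N.*2).+1) (2 * (N %/ p ^ k) + (k <= L)).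
  apply: leq_sum => k _.
  case: (leqP k L) => kL.
    by rewrite -mul2n; apply: div2_le; rewrite expn_gt0 (ltnW p1).
  rewrite divn_small ?addn0 //.
  by rewrite ltnNge; apply/negP => /(trunc_log_max p1); rewrite leqNgt kL.
move: H; rewrite big_split /= -big_distrr /= -B' sum_ind_le -A E => H.
apply: leq_trans (geq_minr (N.*2) L); lia.
Qed.


Lemma central_bin_le N : 0 < N -> 'C(N.*2, N) <= N.*2 ^ cntp (N.*2).+1.
Proof.
move=> N0; set C := 'C(N.*2, N).
have C0 : 0 < C by rewrite bin_gt0 -addnn leq_addr.
rewrite {1}(prod_prime_decomp C0) prime_decompE big_map /=.
apply: (@leq_trans (\prod_(p <- primes C) N.*2)).
  rewrite big_seq [X in _ <= X]big_seq; apply: leq_prod => p.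
  by rewrite mem_primes => /andP[pp _]; apply: logn_bin.
rewrite big_const_seq iter_muln_1 count_predT.
apply: leq_pexp2l; first by rewrite double_gt0.
rewrite /cntp -size_filter; apply: uniq_leq_size; first exact: primes_uniq.
move=> p pin; have pp : prime p by move: pin; rewrite mem_primes => /andP[].
rewrite mem_filter pp mem_iota /= add0n ltnS.
have l0 : 0 < logn p C by rewrite logn_gt0.
apply: leq_trans (logn_bin pp N0).
by rewrite -{1}(expn1 p) leq_pexp2l // prime_gt0.
Qed.

Lemma step4 u : 16 <= u -> (u.+1) ^ 4 <= 2 * u ^ 4.
Proof.
move=> H; rewrite !expnS expn0 !muln1.
have H2 : 16 * u <= u * u by rewrite leq_mul2r H orbT.
have H3 : 16 * (u * u) <= u * (u * u) by rewrite leq_mul2r H orbT.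
have H4 : 16 * (u * (u * u)) <= u * (u * (u * u)) by rewrite leq_mul2r H orbT.
nia.
Qed.

Lemma pow_ge u : 16 <= u -> u ^ 4 <= 2 ^ u.
Proof.
move=> /subnKC <-; elim: (u - 16) => [|d IH].
  by rewrite addn0 -[16]/(2 ^ 4) -expnM.
rewrite addnS [2 ^ _.+1]expnS; apply: (leq_trans (step4 _)); first by rewrite leq_addr.
by rewrite leq_mul2l IH orbT.
Qed.
Lemma final_num q k : 2 ^ 1100 <= q -> q <= 2 * ell q * k + 2 -> ell q * JJ q <= k.
Proof.
move=> Hq Hk.
have tl : 1100 <= trunc_log 2 q by apply: trunc_log_max.
have q0 : 0 < q by apply: leq_trans Hq; rewrite expn_gt0.
clear Hq.
set l := ell q; set u := uu q; set X := 2 ^ u.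
have l1 : 1101 <= l by rewrite /l /ell ltnS.
have f2a : l <= u.*2 := ell_le_2uu q.
have f2b : u.*2 <= l.+2.
  rewrite /u /uu -/l doubleS; have := odd_double_half l; case: (odd _) => /= E; lia.
have f3 : 2 ^ l <= q.*2.
  by rewrite /l /ell expnS mul2n leq_double trunc_logP.
have f4 : X * X <= 8 * q.
  rewrite /X -expnD addnn.
  apply: (@leq_trans (2 ^ l.+2)); first by rewrite leq_exp2l.
  rewrite (expnS 2 l.+1) (expnS 2 l); move: f3; rewrite -mul2n; move: (2 ^ l) => Y; lia.
have u16 : 512 <= u by lia.
have f5 : 264 * u ^ 3 <= X.
  apply: leq_trans (pow_ge (leq_trans _ u16)) => //.
  by rewrite [u ^ 4]expnS leq_mul2r; apply/orP; right; lia.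
have f6 : l ^ 3 <= 8 * u ^ 3.
  apply: (@leq_trans (u.*2 ^ 3)); first exact: leq_pow.
  by rewrite -mul2n expnMn.
have X1 : 1 <= X by rewrite expn_gt0.
have c1 : 1 <= u ^ 3 by rewrite expn_gt0; lia.
have g1 : 264 * u ^ 3 * X <= X * X by rewrite leq_mul2r f5 orbT.
have g2 : l ^ 3 * X <= 8 * u ^ 3 * X by rewrite leq_mul2r f6 orbT.
have g3 : 1 <= u ^ 3 * X by rewrite muln_gt0 c1.
have key : 4 * (l ^ 3 * X) + 2 <= q by nia.
have E : l ^ 3 = l * (l * l) by rewrite !expnS expn0 muln1.
rewrite /JJ /tt /sv -/u -/X -/l.
have : 2 * l * (l * (2 * (X * l))) <= 2 * l * k.
  rewrite E in key; nia.
move=> H; have l0 : 0 < 2 * l by lia.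
by rewrite -(leq_pmul2l l0).
Qed.


Lemma card_primes_set y : #|[set p : 'I_y | prime p]| = cntp y.
Proof.
rewrite -sum1dep_card -(big_mkord (fun p => prime p) (fun _ => 1)) sum1_count.
by rewrite /index_iota subn0.
Qed.

Lemma cheb q k : prime q -> cntp q = k -> 3 <= q -> q <= 2 * ell q * k + 2.
Proof.
move=> pq cq q3.
set N := (q.-1)./2.
have HN : N.*2 <= q.-1 /\ q.-1 <= (N.*2).+1.
  rewrite /N; have := odd_double_half q.-1; case: (odd _) => /= E; lia.
case: HN => HN1 HN2.
have N0 : 0 < N by rewrite -double_gt0; move: HN2 q3; lia.
have C1 := central_bin_ge N.
have C2 := central_bin_le N0.
have C3 : cntp (N.*2).+1 <= k by rewrite -cq; apply: cntp_mono; lia.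
have C4 : N.*2 ^ cntp (N.*2).+1 <= q ^ k.
  apply: (@leq_trans (q ^ cntp (N.*2).+1)); first by apply: leq_pow; lia.
  by apply: leq_pexp2l => //; apply: prime_gt0.
have C5 : q ^ k <= 2 ^ (ell q * k).
  by rewrite expnM; apply: leq_pow; apply: ltnW; apply: q_lt_ell.
have : 2 ^ N <= 2 ^ (ell q * k).
  by apply: leq_trans C1 (leq_trans C2 (leq_trans C4 C5)).
rewrite leq_exp2l // => H.
move: HN2; lia.
Qed.

Lemma ftop_bound n q : prime q -> cntp q = maxface n -> 2 ^ 1100 <= q ->
  ftop n <= 4 ^ maxface n.
Proof.
move=> pq cq Hq.
set k := maxface n.
have nlt := n_lt pq cq.
have q3 : 3 <= q.
  have h4 : 2 ^ 2 <= 2 ^ 1100 := leq_pexp2l (isT : 0 < 2) (isT : 2 <= 1100).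
  exact: leq_trans (leq_trans (isT : 3 <= 2 ^ 2) h4) Hq.
have Hnum : ell q * JJ q <= k by apply: final_num => //; apply: cheb.
clear Hq.
set H := q ^ JJ q.
pose pi : nat_pred := [pred p | p < q].
set A := [set m : 'I_n.+1 | (1 <= m) && squarefree m && (nprimes m == k)].
have Hh : forall m : 'I_n.+1, m \in A -> m`_pi^' < H.
  move=> m; rewrite inE => /andP[/andP[m1 sm] /eqP km].
  have [s [us sq H1 H2]] := per_m pq nlt m1 (ltn_ord m : (m <= n)) sm (etrans km (esym cq)).
  have Hs := NJ (prime_gt1 pq) us sq (leq_ltn_trans H1 H2).
  apply: leq_trans H2 _.
  apply: (@leq_trans (q * q ^ size s)).
    rewrite leq_mul2l; apply/orP; right.
    have := prod_le_cond (s := s) (P := xpredT) (b := q).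
    rewrite count_predT; apply => x xs _.
    by apply: ltnW; move/allP: sq; apply.
  by rewrite -expnS leq_pexp2l // prime_gt0.
pose F := fun m : 'I_n.+1 =>
  ([set p : 'I_q | val p \in primes m], (inord (m`_pi^') : 'I_H.+1)).
have Finj : {in A &, injective F}.
  move=> m1 m2 A1 A2 E.
  have ET := congr1 fst E; have EH := congr1 snd E; simpl in ET, EH.
  have h12 : m1`_pi^' = m2`_pi^'.
    by move: (congr1 (@nat_of_ord _) EH); rewrite !inordK // ltnS ltnW // Hh.
  move: A1 A2; rewrite !inE => /andP[/andP[m1p s1] _] /andP[/andP[m2p s2] _].
  have g12 : m1`_pi = m2`_pi.
    apply: eqn_from_log; rewrite ?part_gt0 // => p.
    rewrite !logn_partE !(sqf_lognE _ s1) !(sqf_lognE _ s2) /=.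
    case: ifP => // pq'.
    have := congr1 (fun S : {set 'I_q} => (@Ordinal q p pq') \in S) ET.
    by rewrite /= !inE /=; move=> ->.
  apply: val_inj => /=.
  by rewrite -(partnC pi m1p) -(partnC pi m2p) g12 h12.
rewrite /ftop -/k -/A -(card_in_imset Finj).
set Pr := [set p : 'I_q | prime p].
have sub : [set F x | x in A] \subset setX (powerset Pr) [set: 'I_H.+1].
  apply/subsetP => x /imsetP [m mA ->].
  rewrite inE /= in_setT andbT powersetE; apply/subsetP => p.
  rewrite !inE mem_primes => /andP[].
  by [].
apply: leq_trans (subset_leq_card sub) _.
rewrite cardsX card_powerset card_primes_set cq cardsT card_ord -/k.
have H2 : H.+1 <= 2 ^ k.
  apply: (@leq_trans (2 ^ (ell q * JJ q))); last by apply: leq_pexp2l.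
  rewrite /H expnM ltn_exp2r; first exact: q_lt_ell.
  by rewrite /JJ /tt /sv /ell muln_gt0 /= muln_gt0 expn_gt0.
apply: (@leq_trans (2 ^ k * 2 ^ k)); first by rewrite leq_mul2l H2 orbT.
by rewrite -expnMn.
Qed.

Definition Q0 : nat := locked (2 ^ 1100).
Lemma Q0E : Q0 = 2 ^ 1100. Proof. by rewrite /Q0 -lock. Qed.
Lemma Q0_gt0 : 0 < Q0. Proof. by rewrite Q0E expn_gt0. Qed.

Lemma q_big n q : prime q -> cntp q = maxface n -> Q0 ^ Q0 <= n -> 2 ^ 1100 <= q.
Proof.
move=> pq cq Hn; rewrite -Q0E leqNgt; apply/negP => Hlt.
have nlt := n_lt pq cq; rewrite -(primS pq) in nlt.
have H : prim q.+1 <= Q0 ^ Q0.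
  apply: leq_trans (prim_le _) _.
  apply: (@leq_trans (Q0 ^ q.+1)); first exact: leq_pow.
  exact: leq_pexp2l Q0_gt0 Hlt.
have := leq_trans nlt (leq_trans H Hn).
by rewrite ltnn.
Qed.

Lemma ftop_final n : Q0 ^ Q0 <= n -> ftop n <= 4 * 4 ^ (maxface n).-1.
Proof.
move=> Hn; have [q [pq cq]] := choose_q (maxface n).
apply: leq_trans (ftop_bound pq cq (q_big pq cq Hn)) _.
clear Hn; case: (maxface n) => [|k] //=.
by rewrite expnS.
Qed.

Local Open Scope ring_scope.

Theorem proposition3p4 :
  exists C : rat, 0 < C /\
    exists K : rat, exists N : nat, forall n : nat, (N <= n)%N ->
      (ftop n)%:R <= K * C ^+ dim_Delta n.
Proof.
exists 4; split; first by rewrite ltr0n.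
exists 4, (Q0 ^ Q0)%N => n Hn.
rewrite /dim_Delta.
have := ftop_final Hn.
by rewrite -(ler_nat rat) natrM natrX.
Qed.
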